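(* Let $A,B>0$, $0<\alpha\le1+\sqrt3$, and $p(x)=\frac{B}{12}[x^4-2A(2+\alpha)x^3+6A^2(1+\alpha)x^2]$. Then there exists $c>0$ independent of $A$ and $B$ such that $p((1+\alpha)A)\ge p(A)\ge cBA^4$. *)

(* Defs.v *)
From mathcomp Require Import all_boot all_order all_algebra.
From mathcomp Require Import reals.
Set Implicit Arguments. Unset Strict Implicit. Unset Printing Implicit Defensive.
Import Order.TTheory GRing.Theory Num.Theory.
Local Open Scope ring_scope.

Definition pquart {R : realType} (A B alpha x : R) : R :=
  B / 12%:R * (x ^+ 4 - 2%:R * A * (2%:R + alpha) * x ^+ 3
               + 6%:R * A ^+ 2 * (1 + alpha) * x ^+ 2).

(* Main.v *)
Require Import Defs.
From mathcomp Require Import all_boot all_order all_algebra.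
From mathcomp Require Import reals.
From mathcomp Require Import ring lra.
Import Order.TTheory GRing.Theory Num.Theory.
Local Open Scope ring_scope.

Theorem proposition4p2 (R : realType) (alpha : R) :
  0 < alpha -> alpha <= 1 + Num.sqrt 3%:R ->
  exists2 c : R, 0 < c &
    forall A B : R, 0 < A -> 0 < B ->
      pquart A B alpha A <= pquart A B alpha ((1 + alpha) * A) /\
      c * B * A ^+ 4 <= pquart A B alpha A.
Proof.
move=> ha hs.
set s := Num.sqrt 3%:R in hs.
have s0 : 0 <= s by apply: sqrtr_ge0.
have s2 : s ^+ 2 = 3%:R by rewrite sqr_sqrtr // ler0n.
have s1 : 1 <= s by rewrite -sqrtr1 ler_sqrt // ler1n.
have key : 0 <= alpha * (4%:R + 6%:R * alpha - alpha ^+ 3).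
  have -> : 4%:R + 6%:R * alpha - alpha ^+ 3
      = (alpha + 2%:R) * ((1 + s - alpha) * (alpha - 1 + s)).
    apply/eqP; rewrite eq_sym -subr_eq0.
    have -> : (alpha + 2%:R) * ((1 + s - alpha) * (alpha - 1 + s))
       - (4%:R + 6%:R * alpha - alpha ^+ 3) = (alpha + 2%:R) * (s ^+ 2 - 3%:R) by ring.
    by rewrite s2 subrr mulr0.
  apply: mulr_ge0; first lra.
  apply: mulr_ge0; first lra.
  apply: mulr_ge0; lra.
exists (1 / 4%:R); first lra.
move=> A B hA hB.
have hK : 0 <= B * A ^+ 4 / 12%:R.
  apply: divr_ge0; last lra.
  apply: mulr_ge0; [lra | exact: exprn_ge0 (ltW hA)].
have e1 : pquart A B alpha A = B * A ^+ 4 / 12%:R * (3%:R + 4%:R * alpha).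
  by rewrite /pquart; ring.
have e2 : pquart A B alpha ((1 + alpha) * A)
    = B * A ^+ 4 / 12%:R * (3%:R + 4%:R * alpha + alpha * (4%:R + 6%:R * alpha - alpha ^+ 3)).
  by rewrite /pquart; ring.
rewrite e2 e1; split.
  by apply: ler_wpM2l => //; lra.
have -> : 1 / 4%:R * B * A ^+ 4 = B * A ^+ 4 / 12%:R * 3%:R.
  by field.
by apply: ler_wpM2l => //; lra.
Qed.
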